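(* Let $f$ be an additive function from the positive integers to the nonnegative integers with $f(p)\ge1$ for every prime $p$. Let $n=\prod_{i=1}^k p_i^{e_i}$ with distinct primes $p_i$ and $e_i\ge1$. Then $n$ is $f$-practical if and only if $$f(p_i^e)\le 1+\sum_{\substack{d\mid n\\ f(d)<f(p_i^e)}} f(d)$$ holds for every $1\le i\le k$ and every $1\le e\le e_i$.
   Context: $f$ additive means $f(ab)=f(a)+f(b)$ whenever $\gcd(a,b)=1$ (so $f(1)=0$). $S_f(n)=\sum_{d\mid n}f(d)$. A positive integer $n$ is $f$-practical if every positive integer $m\le S_f(n)$ equals $\sum_{d\in\mathcal{D}}f(d)$ for some set $\mathcal{D}$ of distinct divisors of $n$. *)

(* Defs.v *)
From mathcomp Require Import all_boot.
Set Implicit Arguments. Unset Strict Implicit. Unset Printing Implicit Defensive.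

Definition additive (f : nat -> nat) : Prop :=
  forall a b, 0 < a -> 0 < b -> coprime a b -> f (a * b) = f a + f b.

Definition S_f (f : nat -> nat) (n : nat) : nat := \sum_(d <- divisors n) f d.

(* n is f-practical: every 1 <= m <= S_f(n) is a sum of f over a set of
   distinct divisors of n (a subsequence of the duplicate-free list
   divisors n). *)
Definition f_practical (f : nat -> nat) (n : nat) : Prop :=
  forall m, 0 < m -> m <= S_f f n ->
    exists D : seq nat, subseq D (divisors n) /\ \sum_(d <- D) f d = m.

(* Main.v *)
Require Import Defs.
From mathcomp Require Import all_boot.
From mathcomp Require Import zify.

Lemma sum_subseq_le (T : eqType) (D s : seq T) (P : pred T) (F : T -> nat) :
  subseq D s -> \sum_(x <- D | P x) F x <= \sum_(x <- s | P x) F x.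
Proof.
elim: s D => [|y s IH] D.
  by rewrite subseq0 => /eqP ->; rewrite big_nil.
case: D => [|x D] /=; first by move=> _; rewrite big_nil.
case: eqP => [-> | _] H.
  rewrite !big_cons; case: (P y); last exact: IH.
  by rewrite leq_add2l; exact: IH.
rewrite [X in _ <= X]big_cons; apply: leq_trans (IH _ H) _.
by case: (P y) => //; exact: leq_addl.
Qed.

Lemma subseq_rem_ins (T : eqType) (w : T -> nat) x (s D' : seq T) :
  x \in s -> subseq D' (rem x s) ->
  exists D, subseq D s /\ \sum_(y <- D) w y = w x + \sum_(y <- D') w y.
Proof.
elim: s D' => [|y s IH] D' //.
rewrite in_cons => xin.
case: (eqVneq y x) => [eyx | nyx].
  subst y; rewrite /= eqxx => H.
  by exists (x :: D'); split; [rewrite /= eqxx | rewrite big_cons].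
have xs : x \in s by move: xin; rewrite eq_sym (negbTE nyx).
rewrite [rem _ _]/= (negbTE nyx).
case: D' => [|z D'] H.
  exists [:: x]; split.
    by rewrite sub1seq.
  by rewrite big_seq1 big_nil addn0.
move: H => /=; case: eqP => [-> | _] H.
  have [D [H1 H2]] := IH D' xs H.
  exists (y :: D); split; first by rewrite /= eqxx.
  by rewrite !big_cons H2 addnCA.
have [D [H1 H2]] := IH (z :: D') xs H.
exists D; split => //; exact: subseq_trans H1 (subseq_cons s y).
Qed.

Lemma exmax (T : eqType) (w : T -> nat) (x0 : T) s :
  exists2 x, x \in x0 :: s & forall y, y \in x0 :: s -> w y <= w x.
Proof.
elim: s => [|z s [x xin xmax]].
  by exists x0; [rewrite mem_head | move=> y; rewrite inE => /eqP ->].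
case: (leqP (w z) (w x)) => H.
  exists x; first by move: xin; rewrite !inE => /orP [->|->]; rewrite ?orbT.
  move=> y; rewrite !inE => /orP [/eqP ->|/orP [/eqP ->|ys]] //.
    by apply: xmax; rewrite mem_head.
  by apply: xmax; rewrite inE ys orbT.
exists z; first by rewrite !inE eqxx orbT.
move=> y; rewrite !inE => /orP [/eqP ->|/orP [/eqP ->|ys]] //.
    by apply: leq_trans (ltnW H); apply: xmax; rewrite mem_head.
by apply: leq_trans (ltnW H); apply: xmax; rewrite inE ys orbT.
Qed.

Lemma sum_rem (T : eqType) (P : pred T) (F : T -> nat) x s : x \in s ->
  \sum_(y <- s | P y) F y = (if P x then F x else 0) + \sum_(y <- rem x s | P y) F y.
Proof.
move=> xs; rewrite (perm_big _ (perm_to_rem xs)) big_cons.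
by case: (P x).
Qed.

Lemma interval (T : eqType) (w : T -> nat) (s : seq T) :
  (forall x, x \in s -> w x <= 1 + \sum_(y <- s | w y < w x) w y) ->
  forall m, m <= \sum_(y <- s) w y ->
  exists D, subseq D s /\ \sum_(y <- D) w y = m.
Proof.
move: {2}(size s) (leqnn (size s)) => k; elim: k s => [|k IHk] s.
  rewrite leqn0 => /nilP -> _ m; rewrite big_nil leqn0 => /eqP ->.
  by exists [::]; rewrite big_nil.
case: s => [|x0 s0] hs.
  move=> _ m; rewrite big_nil leqn0 => /eqP ->.
  by exists [::]; rewrite big_nil.
set s := x0 :: s0.
move=> hyp m hm.
have [x xin xmax] := @exmax _ w x0 s0.
have sz : size (rem x s) <= k by rewrite size_rem //.
have hyp' : forall y, y \in rem x s ->
    w y <= 1 + \sum_(z <- rem x s | w z < w y) w z.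
  move=> y yin; have ys := mem_rem yin.
  have := hyp y ys; rewrite (@sum_rem _ _ _ _ _ xin).
  by rewrite ltnNge xmax.
have Es : \sum_(y <- s) w y = w x + \sum_(y <- rem x s) w y.
  by rewrite (@sum_rem _ _ _ _ _ xin).
have hx := hyp x xin.
rewrite (@sum_rem _ _ _ _ _ xin) ltnn add0n in hx.
have hx2 := @sum_subseq_le _ _ _ (fun z => w z < w x) w (subseq_refl (rem x s)).
have hx3 : \sum_(z <- rem x s | w z < w x) w z <= \sum_(z <- rem x s) w z.
  rewrite big_mkcond /=; apply: leq_sum => i _; by case: ifP.
case: (leqP m (\sum_(y <- rem x s) w y)) => hm2.
  have [D [H1 H2]] := IHk _ sz hyp' m hm2.
  by exists D; split => //; exact: subseq_trans H1 (rem_subseq x s).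
have [D' [H1 H2]] := IHk _ sz hyp' (m - w x) ltac:(lia).
have [D [H3 H4]] := @subseq_rem_ins _ w _ _ _ xin H1.
have hx4 : w x <= m by move: hx; rewrite -/s; lia.
by exists D; split => //; rewrite H4 H2; lia.
Qed.

Lemma key (f : nat -> nat) (n : nat) :
  additive f -> 0 < n ->
  (forall p e, prime p -> p %| n -> 1 <= e <= logn p n ->
     f (p ^ e) <= 1 + \sum_(d <- divisors n | f d < f (p ^ e)) f d) ->
  forall d, d %| n -> f d <= 1 + \sum_(y <- divisors n | f y < f d) f y.
Proof.
move=> addf n0 cond d; elim/ltn_ind: d => d IH dn.
have d0 : 0 < d by apply: dvdn_gt0 dn.
have f1 : f 1 = 0 by have := addf 1 1 isT isT isT; rewrite muln1; lia.
case: (eqVneq d 1) => [-> | d1]; first by rewrite f1.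
have d1' : 1 < d by lia.
set p := pdiv d.
have pp : prime p := pdiv_prime d1'.
have pd : p %| d := pdiv_dvd d.
have [m cpm dE] := pfactor_coprime pp d0.
set e := logn p d in dE.
have e1 : 0 < e by rewrite /e logn_gt0 mem_primes pp d0 pd.
have m0 : 0 < m by move: d0; rewrite dE; case: m {cpm dE}.
have pe1 : 1 < p ^ e by apply: leq_ltn_trans e1 (ltn_expl _ (prime_gt1 pp)).
have cem : coprime (p ^ e) m by apply: coprimeXl.
have fd : f d = f (p ^ e) + f m.
  by rewrite dE mulnC addf // expn_gt0 prime_gt0.
have pn : p %| n := dvdn_trans pd dn.
have ele : e <= logn p n := dvdn_leq_log p n0 dn.
have hc := cond p e pp pn ltac:(rewrite e1 ele).
have mn : m %| n by apply: dvdn_trans dn; rewrite dE dvdn_mulr.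
have pen : p ^ e %| n by apply: dvdn_trans dn; rewrite dE dvdn_mull.
case: (eqVneq (f m) 0) => fm; first by rewrite fd fm addn0; exact: hc.
case: (eqVneq (f (p ^ e)) 0) => fpe.
  rewrite fd fpe add0n; apply: IH => //.
  by rewrite dE; apply: ltn_Pmulr.
have nem : p ^ e != m.
  apply/eqP => E; move: cpm; rewrite -E /coprime.
  have : p %| p ^ e by rewrite dvdn_exp.
  by move/gcdn_idPl => ->; move: (prime_gt1 pp); case: (p) => [|[]].
have pein : p ^ e \in divisors n by rewrite -dvdn_divisors.
have min : m \in rem (p ^ e) (divisors n).
  by rewrite (mem_rem_uniq _ (divisors_uniq n)) inE eq_sym nem /= -dvdn_divisors.
rewrite (@sum_rem _ _ _ _ _ pein) (@sum_rem _ _ _ _ _ min).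
have -> : f (p ^ e) < f d.
  by rewrite fd -{1}(addn0 (f (p ^ e))) ltn_add2l lt0n fm.
have -> : f m < f d.
  by rewrite fd -{1}(add0n (f m)) ltn_add2r lt0n fpe.
rewrite fd; apply: (leq_trans _ (leq_addl 1 _)); rewrite addnA; exact: leq_addr.
Qed.

Theorem lemma6p1 (f : nat -> nat) (n : nat) :
  additive f ->
  (forall p, prime p -> 1 <= f p) ->
  0 < n ->
  f_practical f n <->
  (forall p e, prime p -> p %| n -> 1 <= e <= logn p n ->
     f (p ^ e) <= 1 + \sum_(d <- divisors n | f d < f (p ^ e)) f d).
Proof.
move=> addf fp n0; split.
  move=> prac p e pp pn /andP [e1 ele].
  rewrite leqNgt; apply/negP => H.
  have pen : p ^ e %| n by rewrite pfactor_dvdn.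
  have pein : p ^ e \in divisors n by rewrite -dvdn_divisors.
  have hS : 1 + \sum_(d <- divisors n | f d < f (p ^ e)) f d <= S_f f n.
    apply: leq_trans (ltnW H) _; rewrite /S_f.
    have := @sum_subseq_le _ [:: p ^ e] (divisors n) xpredT f ltac:(by rewrite sub1seq) .
    by rewrite big_seq1.
  have [D [sD eD]] := prac _ (ltn0Sn _) hS.
  case: (boolP (all (fun d => f d < f (p ^ e)) D)) => [/all_filterP alD | /allPn [d dD ged]].
    have E : \sum_(d <- D | f d < f (p ^ e)) f d = \sum_(d <- D) f d.
      by rewrite -big_filter alD.
    have := @sum_subseq_le _ _ _ (fun d => f d < f (p ^ e)) f sD.
    by rewrite E eD ltnn.
  have := @sum_subseq_le _ [:: d] D xpredT f ltac:(by rewrite sub1seq).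
  rewrite big_seq1 eD; rewrite -leqNgt in ged; lia.
move=> cond m m0 mS.
apply: (@interval _ f) mS => d.
rewrite -dvdn_divisors // => dn; exact: key.
Qed.
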